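(* Let $p_1,p_2,\dots$ be an infinite sequence of distinct primes and $e_i\in\mathbb N$ for each $i$. Consider the unital ring $P=\prod_{i\in\mathbb N}\mathbb Z(p_i^{e_i})$ (componentwise operations) and let $G$ be a unital subring of $P$ containing the ideal $T=\bigoplus_{i\in\mathbb N}\mathbb Z(p_i^{e_i})$. If the quotient ring $G/T$ is a field, then $G$ is an E-ring and its additive group is strongly co-Hopfian; moreover, if the $e_i$ are not bounded, then $G$ is not uniformly strongly co-Hopfian.
   Context: All groups are abelian. A ring $R$ is an E-ring if every endomorphism of its additive group is multiplication by some element of $R$. A group $G$ is strongly co-Hopfian if for every endomorphism $f$ there is $n\in\mathbb N$ with $f^n(G)=f^{n+1}(G)$; it is uniformly strongly co-Hopfian if there is a fixed $m$ with $\phi^m(G)=\phi^{m+1}(G)$ for all endomorphisms $\phi$. $\mathbb Z(q)$ denotes the cyclic group (ring) of order $q$. *)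

(* Defs.v *)
From mathcomp Require Import all_boot all_algebra.
Set Implicit Arguments. Unset Strict Implicit. Unset Printing Implicit Defensive.
Import GRing.Theory.
Local Open Scope ring_scope.

Definition Prod (p e : nat -> nat) : Type := forall i : nat, 'Z_(p i ^ e i).

Section ProdOps.
Variables p e : nat -> nat.
Definition padd (x y : Prod p e) : Prod p e := fun i => x i + y i.
Definition pmul (x y : Prod p e) : Prod p e := fun i => x i * y i.
Definition popp (x : Prod p e) : Prod p e := fun i => - x i.
Definition pzero : Prod p e := fun i => 0.
Definition pone : Prod p e := fun i => 1.

Definition inT (x : Prod p e) : Prop := exists N : nat, forall i, (N <= i)%N -> x i = 0.

Definition unital_subring (G : Prod p e -> Prop) : Prop :=
  [/\ G pone,
      (forall x y, G x -> G y -> G (padd x y)),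
      (forall x, G x -> G (popp x)) &
      (forall x y, G x -> G y -> G (pmul x y))].

(* The quotient ring G/T is a field (T is an ideal of G when T ⊆ G):
   it is nonzero and every nonzero class is invertible. *)
Definition quotient_is_field (G : Prod p e -> Prop) : Prop :=
  ~ inT pone /\
  forall x, G x -> ~ inT x -> exists y, G y /\ inT (padd (pmul x y) (popp pone)).

(* additive endomorphisms of the group G (values outside G irrelevant) *)
Definition add_endo (G : Prod p e -> Prop) (f : Prod p e -> Prod p e) : Prop :=
  (forall x, G x -> G (f x)) /\ (forall x y, G x -> G y -> f (padd x y) = padd (f x) (f y)).

Definition E_ring (G : Prod p e -> Prop) : Prop :=
  forall f, add_endo G f -> exists r, G r /\ forall x, G x -> f x = pmul r x.

Definition img_iter (G : Prod p e -> Prop) (f : Prod p e -> Prod p e) (n : nat)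
  (y : Prod p e) : Prop := exists x, G x /\ y = iter n f x.

Definition strongly_coHopfian (G : Prod p e -> Prop) : Prop :=
  forall f, add_endo G f -> exists n : nat,
    forall y, img_iter G f n y <-> img_iter G f n.+1 y.

Definition uniformly_strongly_coHopfian (G : Prod p e -> Prop) : Prop :=
  exists m : nat, forall f, add_endo G f ->
    forall y, img_iter G f m y <-> img_iter G f m.+1 y.
End ProdOps.

(* Main.v *)
Require Import Defs.
From mathcomp Require Import all_boot all_algebra.
From Stdlib Require Import Classical FunctionalExtensionality.
Set Implicit Arguments. Unset Strict Implicit. Unset Printing Implicit Defensive.
Import GRing.Theory.
Local Open Scope ring_scope.

Section Main.
Variables (p e : nat -> nat).
Hypotheses (pr : forall i, prime (p i)) (pinj : injective p)
  (e0 : forall i, (0 < e i)%N).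

Local Notation q i := (p i ^ e i)%N.

Lemma pext (x y : Prod p e) : (forall k, x k = y k) -> x = y.
Proof. move=> h; exact: functional_extensionality_dep h. Qed.

Lemma q_gt1 i : (1 < q i)%N.
Proof.
by have := ltn_exp2l 0 (e i) (prime_gt1 (pr i)); rewrite expn0 e0.
Qed.

Lemma coprime_q i j : i != j -> coprime (q i) (q j).
Proof.
move=> ne; rewrite coprime_pexpl // coprime_pexpr // prime_coprime //.
rewrite dvdn_prime2 //; apply/eqP => h; move/eqP: ne; apply; exact: pinj.
Qed.

Lemma Zq_natr0 i a : ((a%:R : 'Z_(q i)) == 0) = (q i %| a)%N.
Proof.
apply/eqP/idP => [h|h].
  have := val_Zp_nat (q_gt1 i) a; rewrite h /= => h2.
  by rewrite /dvdn -h2.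
apply: ord_inj; rewrite val_Zp_nat ?q_gt1 //=.
by move: h; rewrite /dvdn => /eqP.
Qed.

Lemma Zq_cancel i (a : 'Z_(q i)) M : coprime (q i) M -> a *+ M = 0 -> a = 0.
Proof.
move=> cM h.
have u : (M%:R : 'Z_(q i)) \is a GRing.unit by rewrite unitZpE ?q_gt1.
by apply: (mulIr u); rewrite mul0r mulr_natr h.
Qed.

Lemma Zq_nilp i (a : 'Z_(q i)) n : a \isn't a GRing.unit -> (e i <= n)%N ->
  a ^+ n = 0.
Proof.
move=> nu len; rewrite -(subnK len) exprD.
suff -> : a ^+ e i = 0 by rewrite mulr0.
move: nu; rewrite -(natr_Zp a) -natrX unitZpE ?q_gt1 //.
rewrite coprime_pexpl // prime_coprime // negbK => pa.
apply/eqP; rewrite Zq_natr0; exact: dvdn_exp2r.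
Qed.

Lemma qM_exists i N : exists M, coprime (q i) M /\
  forall k, (k < N)%N -> k != i -> (q k %| M)%N.
Proof.
elim: N => [|N [M [cM hM]]]; first by exists 1%N; split => //; rewrite coprimen1.
case: (eqVneq N i) => [eNi|ne].
  exists M; split => // k; rewrite ltnS leq_eqVlt => /orP [/eqP ->|/hM //].
  by rewrite eNi eqxx.
exists (M * q N)%N; split.
  by rewrite coprimeMr cM coprime_q // eq_sym.
move=> k; rewrite ltnS leq_eqVlt => /orP [/eqP ->|hk] ki; first exact: dvdn_mull.
by apply: dvdn_mulr; apply: hM.
Qed.

Definition nsc n (x : Prod p e) : Prod p e := fun k => x k *+ n.

Variable G : Prod p e -> Prop.
Hypotheses (usub : unital_subring G) (TG : forall x, inT x -> G x)
  (qf : quotient_is_field G).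

Lemma G1 : G (pone p e). Proof. by case: usub. Qed.
Lemma GD x y : G x -> G y -> G (padd x y). Proof. by case: usub => _ h _ _; apply: h. Qed.
Lemma GN x : G x -> G (popp x). Proof. by case: usub => _ _ h _; apply: h. Qed.
Lemma GM x y : G x -> G y -> G (pmul x y). Proof. by case: usub => _ _ _ h; apply: h. Qed.

Lemma G0 : G (pzero p e).
Proof.
have -> : (pzero p e) = padd (pone p e) (popp (pone p e)) by apply: pext => k; rewrite /padd /popp subrr.
apply: GD; [exact: G1 | apply: GN; exact: G1].
Qed.

Lemma nsc0 x : nsc 0 x = (pzero p e). Proof. by apply: pext => k; rewrite /nsc mulr0n. Qed.
Lemma nscS n x : nsc n.+1 x = padd x (nsc n x).
Proof. by apply: pext => k; rewrite /nsc /padd mulrS. Qed.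

Lemma Gnsc n x : G x -> G (nsc n x).
Proof.
move=> Gx; elim: n => [|n IH]; first by rewrite nsc0; exact: G0.
by rewrite nscS; apply: GD.
Qed.

Section Endo.
Variable f : Prod p e -> Prod p e.
Hypothesis Hf : add_endo G f.

Lemma fG x : G x -> G (f x). Proof. by case: Hf => h _; apply: h. Qed.
Lemma fD x y : G x -> G y -> f (padd x y) = padd (f x) (f y).
Proof. by case: Hf => _ h; apply: h. Qed.

Lemma f0 : f (pzero p e) = (pzero p e).
Proof.
have h := fD G0 G0.
have e00 : padd (pzero p e) (pzero p e) = (pzero p e) by apply: pext => k; rewrite /padd addr0.
rewrite e00 in h.
apply: pext => k; have hk := congr1 (fun z => z k) h; rewrite /= /padd in hk.
rewrite /pzero; apply: (addrI (f (pzero p e) k)); rewrite addr0 -hk //.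
Qed.

Lemma fnsc n x : G x -> f (nsc n x) = nsc n (f x).
Proof.
move=> Gx; elim: n => [|n IH]; first by rewrite !nsc0 f0.
by rewrite !nscS fD ?IH //; apply: Gnsc.
Qed.

Lemma fopp x : G x -> f (popp x) = popp (f x).
Proof.
move=> Gx.
have h := fD Gx (GN Gx).
have e1 : padd x (popp x) = (pzero p e) by apply: pext => k; rewrite /padd /popp subrr.
rewrite e1 f0 in h.
apply: pext => k; have hk := congr1 (fun z => z k) h; rewrite /= /padd /pzero in hk.
rewrite /popp; apply/eqP; rewrite -addr_eq0 addrC; apply/eqP; by rewrite -hk.
Qed.

Lemma key i y : G y -> y i = 0 -> f y i = 0.
Proof.
move=> Gy yi.
pose c := nsc (q i) (pone p e).
have Gc : G c by apply: Gnsc; exact: G1.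
have cT : ~ inT c.
  move=> [N hN].
  have ne : maxn N i.+1 != i.
    by apply/eqP => h; have := leq_maxr N i.+1; rewrite h ltnn.
  have := hN _ (leq_maxl N i.+1); rewrite /c /nsc /pone => /eqP.
  rewrite Zq_natr0 => dv.
  have := coprime_q ne; rewrite /coprime (gcdn_idPl dv) => /eqP h1.
  by have := q_gt1 (maxn N i.+1); rewrite h1.
have [_ qf2] := qf.
have [d [Gd [N hN]]] := qf2 c Gc cT.
have [M [cM hM]] := qM_exists i N.
have eq : nsc M y = pmul c (nsc M (pmul d y)).
  apply: pext => k; rewrite /nsc /pmul /c /nsc /pone.
  case: (ltnP k N) => hk.
    case: (eqVneq k i) => [->|ne]; first by rewrite yi mulr0 !mul0rn mulr0.
    have M0 : (M%:R : 'Z_(q k)) = 0 by apply/eqP; rewrite Zq_natr0; apply: hM.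
    have M0' (a : 'Z_(q k)) : a *+ M = 0 by rewrite -mulr_natr M0 mulr0.
    by rewrite !M0' mulr0.
  have := hN k hk; rewrite /padd /pmul /popp /c /nsc /pone => /eqP.
  rewrite subr_eq0 => /eqP cd1.
  by rewrite mulrnAr mulrA cd1 mul1r.
have Gz : G (nsc M (pmul d y)) by apply: Gnsc; apply: GM.
have e2 : pmul c (nsc M (pmul d y)) = nsc (q i) (nsc M (pmul d y)).
  by apply: pext => k; rewrite /pmul /c /nsc /pone mulr_natl.
have Gdy : G (pmul d y) by apply: GM.
have := congr1 f eq; rewrite e2 !fnsc // => /(congr1 (fun z => z i)).
rewrite /nsc => h.
have qi0 : ((q i)%:R : 'Z_(q i)) = 0 by apply/eqP; rewrite Zq_natr0.
move: h; rewrite -[X in _ = X]mulr_natr qi0 mulr0 => h.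
exact: Zq_cancel cM h.
Qed.

Lemma Ering_f : exists r, G r /\ forall x, G x -> f x = pmul r x.
Proof.
exists (f (pone p e)); split; first by apply: fG; exact: G1.
move=> x Gx; apply: pext => k.
pose n := nat_of_ord (x k).
have Gz : G (nsc n (pone p e)) by apply: Gnsc; exact: G1.
have Gy : G (padd x (popp (nsc n (pone p e)))) by apply: GD => //; apply: GN.
have y0 : padd x (popp (nsc n (pone p e))) k = 0.
  by rewrite /padd /popp /nsc /pone /n natr_Zp subrr.
have := @key k _ Gy y0.
have GNz := GN Gz.
rewrite (fD Gx GNz) (fopp Gz) (fnsc _ (G1)).
rewrite /padd /popp /nsc /pone /pmul => /eqP.
rewrite subr_eq0 => /eqP ->.
by rewrite -mulr_natr natr_Zp.
Qed.
End Endo.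

Lemma iter_mul (r : Prod p e) n x k : iter n (pmul r) x k = r k ^+ n * x k.
Proof.
elim: n => [|n IH] /=; first by rewrite mul1r.
by rewrite /pmul IH mulrA -exprS.
Qed.

Lemma iter_G f r n x : add_endo G f -> (forall x, G x -> f x = pmul r x) ->
  G x -> G (iter n f x) /\ iter n f x = (fun k => r k ^+ n * x k).
Proof.
move=> Hf hr Gx; elim: n => [|n [IH1 IH2]] /=.
  by split => //; apply: pext => k; rewrite mul1r.
split; first exact: fG.
by rewrite hr // IH2; apply: pext => k; rewrite /pmul mulrA -exprS.
Qed.

Lemma sch : strongly_coHopfian G.
Proof.
move=> f Hf.
have [r [Gr hr]] := Ering_f Hf.
have [N [s [Gs hs]]] : exists N s, G s /\ forall k, (N <= k)%N ->
   r k = 0 \/ r k * s k = 1.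
  case: (classic (inT r)) => [[N hN]|nT].
    by exists N, (pzero p e); split; [exact: G0 | move=> k hk; left; apply: hN].
  have [_ qf2] := qf; have [s [Gs [N hN]]] := qf2 r Gr nT.
  exists N, s; split => // k hk; right.
  by move: (hN k hk); rewrite /padd /pmul /popp /pone => /eqP; rewrite subr_eq0 => /eqP.
pose n := (\max_(j < N) e j).+1.
have en : forall k, (k < N)%N -> (e k <= n)%N.
  move=> k hk; apply: leqW; by have := @leq_bigmax _ (fun j : 'I_N => e j) (Ordinal hk).
exists n => y; split.
  move=> [x [Gx ->]].
  pose w : Prod p e := fun k => if (k < N)%N then
     (if r k \is a GRing.unit then (r k)^-1 * x k - s k * x k else 0) else 0.
  have Gw : G w by apply: TG; exists N => k hk; rewrite /w ltnNge hk.
  have Gz : G (padd (pmul s x) w) by apply: GD => //; apply: GM.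
  exists (padd (pmul s x) w); split => //.
  have [_ ->] := iter_G n Hf hr Gx.
  have [_ ->] := iter_G n.+1 Hf hr Gz.
  apply: pext => k; rewrite /padd /pmul /w.
  case: (ltnP k N) => hk.
    case: ifP => u.
      rewrite addrC subrK exprSr -mulrA (mulrA (r k)) (mulrV u) mul1r //.
    rewrite !Zq_nilp ?u ?mul0r //; first by apply: leqW; apply: en.
    exact: en.
  rewrite addr0; case: (hs k hk) => [->|h].
    by rewrite /n !exprS !mul0r.
  by rewrite exprSr -mulrA (mulrA (r k)) h mul1r.
move=> [x [Gx ->]]; exists (f x); split; first exact: fG.
by rewrite iterSr.
Qed.

Lemma notusch : (~ exists B : nat, forall i, (e i <= B)%N) ->
  ~ uniformly_strongly_coHopfian G.
Proof.
move=> nb [m hm].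
have [i hi] : exists i, (m < e i)%N.
  case: (classic (exists i, (m < e i)%N)) => // H; exfalso; apply: nb.
  exists m => i; rewrite leqNgt; apply/negP => hh; apply: H; by exists i.
pose r : Prod p e := fun k => if k == i then (p i)%:R else 0.
pose dl : Prod p e := fun k => if k == i then 1 else 0.
have inTi (z : Prod p e) : (forall k, k != i -> z k = 0) -> inT z.
  move=> hz; exists i.+1 => k hk; apply: hz; apply/eqP => h; move: hk.
  by rewrite h ltnn.
have Gr : G r by apply: TG; apply: inTi => k; rewrite /r => /negbTE ->.
have Gdl : G dl by apply: TG; apply: inTi => k; rewrite /dl => /negbTE ->.
have Hf : add_endo G (pmul r).
  split; first by move=> x Gx; apply: GM.
  by move=> x y _ _; apply: pext => k; rewrite /pmul /padd mulrDr.
have [] := hm _ Hf (iter m (pmul r) dl).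
move=> /(_ (ex_intro _ dl (conj Gdl erefl))) [x' [_ h]] _.
have := congr1 (fun z => z i) h; rewrite /= iter_mul /pmul iter_mul /r /dl eqxx mulr1 mulrA -exprS.
rewrite -(natr_Zp (x' i)) -!natrX -natrM => /(congr1 (@nat_of_ord _)).
rewrite !val_Zp_nat ?q_gt1 // => hmod.
have dv : (p i ^ m.+1 %| q i)%N by apply: dvdn_exp2l.
have := congr1 (fun t => t %% p i ^ m.+1)%N hmod => /=.
rewrite !(modn_dvdm _ dv) modnMr modn_small; last first.
  by rewrite ltn_exp2l // prime_gt1.
by move=> /eqP; rewrite expn_eq0 (negbTE (lt0n_neq0 (prime_gt0 (pr i)))).
Qed.

End Main.

Theorem mainTheorem16 (p e : nat -> nat) (G : Prod p e -> Prop) :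
  (forall i, prime (p i)) ->
  injective p ->
  (forall i, (0 < e i)%N) ->
  unital_subring G ->
  (forall x, inT x -> G x) ->
  quotient_is_field G ->
  E_ring G /\ strongly_coHopfian G /\
  ((~ exists B : nat, forall i, (e i <= B)%N) -> ~ uniformly_strongly_coHopfian G).
Proof.
move=> pr pinj e0 usub TG qf; split; [|split].
- by move=> f Hf; apply: (Ering_f pr pinj e0 usub qf Hf).
- exact: (sch pr pinj e0 usub TG qf).
- exact: (notusch pr e0 usub TG).
Qed.
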